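(* Fix $c\in(0,1)$ and a countable collection of languages $\mathcal{L}$. There exists an element-based generator that generates in the limit from $\mathcal{L}$ under enumerations with $c$-noise and arbitrary omissions (i.e., for every $K\in\mathcal{L}$ and every enumeration of $K$ with $c$-noise and arbitrary omissions there is $n^\star$ with $w_n\in K$ for all $n\ge n^\star$) if and only if the following condition holds: for every non-empty finite subcollection $\mathcal{L}'\subseteq\mathcal{L}$ and every enumeration $x_{1:\infty}$, either (a) there is some $L'\in\mathcal{L}'$ such that $R(L';x_{1:n})>c$ for infinitely many $n$, or (b) $|\bigcap_{L\in\mathcal{L}'}L|=\infty$.
   Context: The universe is $U=\mathbb{N}$. A language is an infinite subset of $U$; a collection is a countable family of languages. An enumeration is a sequence $x_1,x_2,\dots$ of distinct elements of $U$; $S_n=\{x_1,\dots,x_n\}$. The empirical noise rate is $R(L;x_{1:n})=\frac1n|\{t\le n:x_t\notin L\}|$. An enumeration of $L$ with $c$-noise is a sequence in which every element of $L$ appears exactly once and there is $n^\star$ with $R(L;x_{1:n})\le c$ for all $n\ge n^\star$. An enumeration of $K$ with $c$-noise and arbitrary omissions is an enumeration with $c$-noise of some $\hat K\subseteq K$ with $|\hat K|=\infty$. An element-based generator is a sequence of maps $\mathds{G}_n$ that, given $x_1,\dots,x_n$ (and knowledge of $\mathcal{L}$, but not of $K$), outputs $w_n\in U\setminus(S_n\cup\{w_1,\dots,w_{n-1}\})$. *)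

(* Defs.v *)
From Stdlib Require Import Reals List.
From mathcomp Require Import ssreflect ssrbool choice.
Import ListNotations.
Open Scope R_scope.

(* Universe U = nat.  A subset of U is a predicate nat -> bool (classically,
   every subset of nat is of this form). *)
Definition lang := nat -> bool.

Definition infinite_set (A : lang) : Prop :=
  forall m : nat, exists y : nat, (m <= y)%nat /\ A y = true.

Definition is_language (A : lang) : Prop := infinite_set A.

(* An enumeration x_1, x_2, ... is encoded 0-based: x_t = x (t-1);
   distinct elements = injectivity. *)
Definition enumeration (x : nat -> nat) : Prop :=
  forall s t : nat, x s = x t -> s = t.

Definition prefix (x : nat -> nat) (n : nat) : list nat := map x (seq 0 n).

Fixpoint noise_count (A : lang) (x : nat -> nat) (n : nat) : nat :=
  match n with
  | O => O
  | S k => (noise_count A x k + (if A (x k) then 0 else 1))%nat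
  end.

Definition noise_rate (A : lang) (x : nat -> nat) (n : nat) : R :=
  INR (noise_count A x n) / INR n.

Definition enum_with_noise (c : R) (A : lang) (x : nat -> nat) : Prop :=
  enumeration x /\
  (forall y, A y = true -> exists t, x t = y) /\
  exists nstar : nat, forall n : nat, (1 <= n)%nat -> (nstar <= n)%nat ->
    noise_rate A x n <= c.

Definition enum_with_noise_omissions (c : R) (K : lang) (x : nat -> nat) : Prop :=
  exists Khat : lang,
    (forall y, Khat y = true -> K y = true) /\ infinite_set Khat /\
    enum_with_noise c Khat x.

(* An element-based generator: G maps the observed prefix [x_1; ...; x_n]
   (n >= 1) to w_n; it may depend on the collection but not on K. *)
Definition gen_output (G : list nat -> nat) (x : nat -> nat) (n : nat) : nat :=
  G (prefix x n).

Definition element_based_generator (G : list nat -> nat) : Prop :=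
  forall x : nat -> nat, enumeration x ->
  forall n : nat, (1 <= n)%nat ->
    ~ In (gen_output G x n) (prefix x n) /\
    (forall m : nat, (1 <= m)%nat -> (m < n)%nat ->
       gen_output G x m <> gen_output G x n).

Definition generates_in_limit_noisy_omissions (c : R) (I : Type) (L : I -> lang)
    (G : list nat -> nat) : Prop :=
  forall (i : I) (x : nat -> nat), enum_with_noise_omissions c (L i) x ->
    exists nstar : nat, forall n : nat, (1 <= n)%nat -> (nstar <= n)%nat ->
      L i (gen_output G x n) = true.

Definition noisy_condition (c : R) (I : Type) (L : I -> lang) : Prop :=
  forall (l : list I), l <> [] ->
  forall x : nat -> nat, enumeration x ->
    (exists i, In i l /\
       forall m : nat, exists n : nat, (m < n)%nat /\ noise_rate (L i) x n > c)
    \/ infinite_set (fun y => forallb (fun i => L i y) l).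

(* Main.v *)
Require Import Defs.
From Stdlib Require Import Reals List Lia Lra Classical ClassicalEpsilon.
From mathcomp Require Import ssreflect ssrbool choice.
Import ListNotations.
Open Scope R_scope.

Definition xl (l : list nat) (t : nat) : nat := nth t l 0%nat.

Lemma nc_ext (A B : lang) x x' n :
  (forall t, (t < n)%nat -> A (x t) = B (x' t)) ->
  noise_count A x n = noise_count B x' n.
Proof.
  induction n as [|n IH]; intros H; simpl; auto.
  rewrite (IH ltac:(intros; apply H; lia)). rewrite (H n ltac:(lia)). reflexivity.
Qed.

Lemma nc_mono (A B : lang) x n :
  (forall y, B y = true -> A y = true) ->
  (noise_count A x n <= noise_count B x n)%nat.
Proof.
  intros H; induction n as [|n IH]; simpl; auto.
  destruct (B (x n)) eqn:E.
  - rewrite (H _ E). lia.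
  - destruct (A (x n)); lia.
Qed.

Lemma nc_filter (A : lang) x n :
  (noise_count A x n + length (filter (fun t => A (x t)) (seq 0 n)))%nat = n.
Proof.
  induction n as [|n IH]; [reflexivity|].
  rewrite seq_S filter_app length_app. cbn [noise_count filter length].
  rewrite Nat.add_0_l. destruct (A (x n)); cbn [length]; lia.
Qed.

Lemma xl_prefix x n t : (t < n)%nat -> xl (prefix x n) t = x t.
Proof.
  intros H. unfold xl, prefix.
  rewrite (@nth_indep nat (map x (seq 0 n)) t 0%nat (x 0%nat) ltac:(rewrite length_map length_seq; lia)).
  rewrite map_nth seq_nth; auto.
Qed.

Lemma rate_prefix (A : lang) x n m : (m <= n)%nat ->
  noise_rate A (xl (prefix x n)) m = noise_rate A x m.
Proof.
  intros H. unfold noise_rate. f_equal. f_equal.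
  apply nc_ext. intros t Ht. rewrite xl_prefix; auto. lia.
Qed.

Lemma rate_mono (A B : lang) x n :
  (forall y, B y = true -> A y = true) ->
  noise_rate A x n <= noise_rate B x n.
Proof.
  intros H. unfold noise_rate, Rdiv. apply Rmult_le_compat_r.
  - destruct n. simpl. rewrite Rinv_0; lra. left; apply Rinv_0_lt_compat, lt_0_INR; lia.
  - apply le_INR, nc_mono; auto.
Qed.

Lemma length_prefix x n : length (prefix x n) = n.
Proof. unfold prefix. rewrite length_map length_seq. auto. Qed.

Definition infP (P : nat -> Prop) := forall m, exists y, (m <= y)%nat /\ P y.

Definition goodl (c : R) {I : Type} (L : I -> lang) (l : list nat) (t : nat) (i : I) : Prop :=
  forall m, (t < m <= length l)%nat -> noise_rate (L i) (xl l) m <= c.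

Definition inter (c : R) {I : countType} (L : I -> lang) (l : list nat) (t : nat) (y : nat) : Prop :=
  forall j i, (j <= t)%nat -> unpickle j = Some i -> goodl c L l t i -> L i y = true.

Fixpoint best (c : R) {I : countType} (L : I -> lang) (l : list nat) (k : nat) : nat :=
  match k with
  | O => O
  | S k' => if excluded_middle_informative (infP (inter c L l (S k'))) then S k'
            else best c L l k'
  end.

Definition pick (P : nat -> Prop) (forb : list nat) : nat :=
  match excluded_middle_informative (exists y, P y /\ ~ In y forb) with
  | left H => proj1_sig (constructive_indefinite_description _ H)
  | right _ => S (list_max forb)
  end.

Lemma pick_notin P forb : ~ In (pick P forb) forb.
Proof.
  unfold pick. destruct (excluded_middle_informative _) as [H|H].
  - destruct (constructive_indefinite_description _ H) as [y [Hy1 Hy2]]. simpl. auto.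
  - intros Hin. assert (Hle : (list_max forb <= list_max forb)%nat) by lia.
    apply list_max_le in Hle. rewrite Forall_forall in Hle.
    specialize (Hle _ Hin). lia.
Qed.

Lemma pick_in P forb : infP P -> P (pick P forb).
Proof.
  intros Hinf. unfold pick. destruct (excluded_middle_informative _) as [H|H].
  - destruct (constructive_indefinite_description _ H) as [y [Hy1 Hy2]]. simpl. auto.
  - exfalso. destruct (Hinf (S (list_max forb))) as [y [Hy1 Hy2]].
    apply H. exists y. split; auto. intros Hin.
    assert (Hle : (list_max forb <= list_max forb)%nat) by lia.
    apply list_max_le in Hle. rewrite Forall_forall in Hle.
    specialize (Hle _ Hin). lia.
Qed.

Definition cand (c : R) {I : countType} (L : I -> lang) (l : list nat) : nat -> Prop :=
  inter c L l (best c L l (length l)).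

Fixpoint outs (c : R) {I : countType} (L : I -> lang) (r : list nat) : list nat :=
  match r with
  | [] => []
  | a :: r' => let o := outs c L r' in
      pick (cand c L (rev r)) (rev r ++ o) :: o
  end.

Definition Gen (c : R) {I : countType} (L : I -> lang) (l : list nat) : nat :=
  hd 0%nat (outs c L (rev l)).

Lemma rev_prefix_S x k : rev (prefix x (S k)) = x k :: rev (prefix x k).
Proof. unfold prefix. rewrite seq_S map_app rev_app_distr. reflexivity. Qed.

Lemma outs_S c {I : countType} (L : I -> lang) x k :
  outs c L (rev (prefix x (S k))) =
  gen_output (Gen c L) x (S k) :: outs c L (rev (prefix x k)).
Proof.
  unfold gen_output, Gen. rewrite rev_prefix_S. reflexivity.
Qed.

Lemma gen_S c {I : countType} (L : I -> lang) x k :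
  gen_output (Gen c L) x (S k) =
  pick (cand c L (prefix x (S k))) (prefix x (S k) ++ outs c L (rev (prefix x k))).
Proof.
  unfold gen_output at 1, Gen. rewrite rev_prefix_S. cbn [outs hd].
  rewrite -rev_prefix_S rev_involutive. reflexivity.
Qed.

Lemma in_outs c {I : countType} (L : I -> lang) x k m :
  (1 <= m <= k)%nat -> In (gen_output (Gen c L) x m) (outs c L (rev (prefix x k))).
Proof.
  induction k as [|k IH]; intros Hm; [lia|].
  rewrite outs_S. destruct (Nat.eq_dec m (S k)) as [->|Hne]; [left; reflexivity|].
  right. apply IH. lia.
Qed.

Lemma Gen_valid c {I : countType} (L : I -> lang) : element_based_generator (Gen c L).
Proof.
  intros x _ n Hn. destruct n as [|k]; [lia|].
  rewrite gen_S. split.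
  - intros Hin. apply (pick_notin (cand c L (prefix x (S k)))
      (prefix x (S k) ++ outs c L (rev (prefix x k)))). apply in_or_app; auto.
  - intros m Hm1 Hm2 Heq. apply (pick_notin (cand c L (prefix x (S k)))
      (prefix x (S k) ++ outs c L (rev (prefix x k)))). rewrite -Heq.
    apply in_or_app; right. apply in_outs. lia.
Qed.

Lemma best_spec c {I : countType} (L : I -> lang) l k t :
  (t <= k)%nat -> infP (inter c L l t) ->
  (t <= best c L l k)%nat /\ infP (inter c L l (best c L l k)).
Proof.
  induction k as [|k IH]; intros Ht Hinf.
  - simpl. assert (t = 0%nat) by lia. subst. auto.
  - simpl. destruct (excluded_middle_informative _) as [H|H].
    + split; auto.
    + destruct (Nat.eq_dec t (S k)) as [->|Hne]; [contradiction|].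
      apply IH; auto. lia.
Qed.

Lemma finite_split c {I : countType} (L : I -> lang) x T K :
  exists lJ N1,
    (forall i, In i lJ -> forall m, (T < m)%nat -> noise_rate (L i) x m <= c) /\
    (forall j i, (j < K)%nat -> unpickle j = Some i ->
       (forall m, (T < m)%nat -> noise_rate (L i) x m <= c) -> In i lJ) /\
    (forall j i, (j < K)%nat -> unpickle j = Some i ->
       ~ (forall m, (T < m)%nat -> noise_rate (L i) x m <= c) ->
       exists m, (T < m <= N1)%nat /\ noise_rate (L i) x m > c).
Proof.
  induction K as [|K IH].
  - exists [], 0%nat. split; [intros i H; destruct H|]. split; intros; lia.
  - destruct IH as [lJ [N1 [H1 [H2 H3]]]].
    destruct (@unpickle I K) as [i0|] eqn:EK.
    + destruct (classic (forall m, (T < m)%nat -> noise_rate (L i0) x m <= c)) as [G|G].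
      * exists (i0 :: lJ), N1. split; [|split].
        -- intros i [<-|Hi]; auto.
        -- intros j i Hj Hu Hg. destruct (Nat.eq_dec j K) as [->|Hne].
           ++ rewrite EK in Hu. injection Hu as <-. left; auto.
           ++ right. apply (H2 j); auto. lia.
        -- intros j i Hj Hu Hg. destruct (Nat.eq_dec j K) as [->|Hne].
           ++ rewrite EK in Hu. injection Hu as <-. contradiction.
           ++ destruct (H3 j i ltac:(lia) Hu Hg) as [m [Hm1 Hm2]]. exists m; split; auto.
      * assert (Hex : exists m, (T < m)%nat /\ noise_rate (L i0) x m > c).
        { apply NNPP. intros Hn. apply G. intros m Hm.
          apply Rnot_lt_le. intros Hlt. apply Hn. exists m. split; auto. }
        destruct Hex as [m0 [Hm0 Hr0]].
        exists lJ, (Nat.max N1 m0). split; [auto|split].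
        -- intros j i Hj Hu Hg. destruct (Nat.eq_dec j K) as [->|Hne].
           ++ rewrite EK in Hu. injection Hu as <-. contradiction.
           ++ apply (H2 j); auto. lia.
        -- intros j i Hj Hu Hg. destruct (Nat.eq_dec j K) as [->|Hne].
           ++ rewrite EK in Hu. injection Hu as <-. exists m0. split; auto. lia.
           ++ destruct (H3 j i ltac:(lia) Hu Hg) as [m [Hm1 Hm2]]. exists m; split; auto. lia.
    + exists lJ, N1. split; [auto|split].
      * intros j i Hj Hu Hg. destruct (Nat.eq_dec j K) as [->|Hne].
        -- rewrite EK in Hu. discriminate.
        -- apply (H2 j); auto. lia.
      * intros j i Hj Hu Hg. destruct (Nat.eq_dec j K) as [->|Hne].
        -- rewrite EK in Hu. discriminate.
        -- apply (H3 j); auto. lia.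
Qed.

Lemma cond_gen c {I : countType} (L : I -> lang) :
  noisy_condition c I L -> generates_in_limit_noisy_omissions c I L (Gen c L).
Proof.
  intros Hcond i x [Khat [Hsub [HKinf [Henum [Hcov [nstar Hns]]]]]].
  set T := Nat.max (pickle i) (Nat.max nstar 1).
  assert (Hgi : forall m, (T < m)%nat -> noise_rate (L i) x m <= c).
  { intros m Hm. eapply Rle_trans; [apply (rate_mono _ Khat); auto|].
    apply Hns; lia. }
  destruct (finite_split c L x T (S T)) as [lJ [N1 [H1 [H2 H3]]]].
  assert (HiJ : In i lJ).
  { apply (H2 (pickle i)); auto. lia. apply pickleK. }
  assert (Hne : lJ <> []). { intros E. rewrite E in HiJ. destruct HiJ. }
  destruct (Hcond lJ Hne x Henum) as [[i0 [Hi0 Hbad]] | Hinter].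
  { exfalso. destruct (Hbad T) as [n [Hn1 Hn2]].
    specialize (H1 i0 Hi0 n Hn1). lra. }
  exists (Nat.max N1 T). intros n Hn1 Hn2.
  destruct n as [|k]; [lia|].
  rewrite gen_S.
  set l := prefix x (S k).
  assert (Hlen : length l = S k) by apply length_prefix.
  assert (HT : infP (inter c L l T)).
  { intros m. destruct (Hinter m) as [y [Hy1 Hy2]]. exists y. split; auto.
    intros j i0 Hj Hu Hg.
    destruct (classic (forall m, (T < m)%nat -> noise_rate (L i0) x m <= c)) as [G|G].
    - rewrite forallb_forall in Hy2. apply Hy2. apply (H2 j); auto. lia.
    - destruct (H3 j i0 ltac:(lia) Hu G) as [m' [Hm' Hr]].
      exfalso. assert (Hm'' : (T < m' <= length l)%nat) by (rewrite Hlen; lia). assert (Hle := Hg m' Hm'').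
      unfold l in Hle. rewrite (rate_prefix (L i0) x (S k) m' ltac:(lia)) in Hle. lra. }
  destruct (best_spec c L l (length l) T ltac:(lia) HT) as [Hb Hbinf].
  assert (Hc := pick_in (cand c L l) (l ++ outs c L (rev (prefix x k))) Hbinf).
  apply (Hc (pickle i) i); [lia|apply pickleK|].
  intros m Hm. rewrite Hlen in Hm Hb. unfold l. rewrite (rate_prefix (L i) x (S k) m ltac:(lia)).
  apply Hgi. lia.
Qed.

Lemma pigeon (f : nat -> nat) N m :
  (forall a b, (N <= a)%nat -> (N <= b)%nat -> f a = f b -> a = b) ->
  (forall a, (N <= a)%nat -> (f a < m)%nat) -> False.
Proof.
  intros Hinj Hb.
  assert (Hnd : NoDup (map f (seq N (S m)))).
  { apply NoDup_map_NoDup_ForallPairs; [|apply seq_NoDup].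
    intros a b Ha Hb'. apply in_seq in Ha. apply in_seq in Hb'. apply Hinj; lia. }
  assert (Hincl : incl (map f (seq N (S m))) (seq 0 m)).
  { intros y Hy. apply in_map_iff in Hy. destruct Hy as [a [<- Ha]].
    apply in_seq in Ha. apply in_seq. specialize (Hb a ltac:(lia)). lia. }
  assert (H := NoDup_incl_length Hnd Hincl).
  rewrite length_map !length_seq in H. lia.
Qed.

Lemma few_in (A : lang) x m n :
  enumeration x -> (forall t, A (x t) = true -> (x t < m)%nat) ->
  (length (filter (fun t => A (x t)) (seq 0 n)) <= m)%nat.
Proof.
  intros Hx Hb.
  assert (Hnd : NoDup (map x (filter (fun t => A (x t)) (seq 0 n)))).
  { apply NoDup_map_NoDup_ForallPairs; [|apply NoDup_filter, seq_NoDup].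
    intros a b _ _. apply Hx. }
  assert (Hincl : incl (map x (filter (fun t => A (x t)) (seq 0 n))) (seq 0 m)).
  { intros y Hy. apply in_map_iff in Hy. destruct Hy as [a [<- Ha]].
    apply filter_In in Ha. destruct Ha as [_ Ha]. apply in_seq. specialize (Hb a Ha). lia. }
  assert (H := NoDup_incl_length Hnd Hincl).
  rewrite length_map !length_seq in H. lia.
Qed.

Lemma combine_N {I : Type} (P : I -> nat -> Prop) (l : list I) :
  (forall i, In i l -> exists N, forall n, (1 <= n)%nat -> (N <= n)%nat -> P i n) ->
  exists N, forall n, (1 <= n)%nat -> (N <= n)%nat -> forall i, In i l -> P i n.
Proof.
  induction l as [|a l IH]; intros H.
  - exists 0%nat. intros n _ _ i [].
  - destruct IH as [N1 HN1]. { intros i Hi. apply H. right; auto. }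
    destruct (H a (or_introl eq_refl)) as [N2 HN2].
    exists (Nat.max N1 N2). intros n Hn1 Hn2 i [<-|Hi].
    + apply HN2; lia.
    + apply HN1; auto; lia.
Qed.

Definition Khat_of (A : lang) (x : nat -> nat) : lang :=
  fun y => A y && (if excluded_middle_informative (exists t, x t = y) then true else false).

Lemma noisy_to_omissions c (A : lang) x :
  0 < c < 1 -> enumeration x ->
  (exists m, forall n, (m < n)%nat -> noise_rate A x n <= c) ->
  enum_with_noise_omissions c A x.
Proof.
  intros Hc Hx [m0 Hm0].
  assert (HK : forall t, Khat_of A x (x t) = A (x t)).
  { intros t. unfold Khat_of. destruct (excluded_middle_informative _) as [H0|H].
    - destruct (A (x t)); reflexivity.
    - exfalso; apply H; exists t; reflexivity. }
  assert (Hnc : forall n, noise_count (Khat_of A x) x n = noise_count A x n).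
  { intros n. apply nc_ext. intros t _. apply HK. }
  exists (Khat_of A x). split; [|split].
  - intros y Hy. unfold Khat_of in Hy. destruct (A y); auto.
  - intros m. apply NNPP. intros Hn.
    assert (Hb : forall t, A (x t) = true -> (x t < m)%nat).
    { intros t Ht. destruct (Nat.lt_ge_cases (x t) m) as [H|H]; auto.
      exfalso. apply Hn. exists (x t). split; auto. rewrite HK; auto. }
    destruct (INR_unbounded (INR m / (1 - c))) as [n0 Hn0].
    set n := Nat.max n0 (S m0).
    assert (Hr := Hm0 n ltac:(unfold n; lia)).
    assert (Hf := few_in A x m n Hx Hb).
    assert (Hsum := nc_filter A x n).
    assert (Hnpos : 0 < INR n) by (apply lt_0_INR; unfold n; lia).
    assert (Hnn0 : INR n0 <= INR n) by (apply le_INR; unfold n; lia).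
    assert (Hm1 : INR m < INR n * (1 - c)).
    { assert (E : INR m = INR m / (1 - c) * (1 - c)) by (field; lra).
      rewrite E. apply Rmult_lt_compat_r; lra. }
    unfold noise_rate in Hr.
    assert (E2 : INR (noise_count A x n) = INR (noise_count A x n) / INR n * INR n)
      by (field; lra).
    assert (Hr2 : INR (noise_count A x n) <= c * INR n).
    { rewrite E2. apply Rmult_le_compat_r; lra. }
    apply (f_equal INR) in Hsum. rewrite plus_INR in Hsum.
    apply le_INR in Hf. lra.
  - split; [auto|split].
    + intros y Hy. unfold Khat_of in Hy.
      destruct (excluded_middle_informative _) as [H|H]; auto.
      rewrite Bool.andb_false_r in Hy. discriminate.
    + exists (S m0). intros n _ Hn. unfold noise_rate. rewrite Hnc. apply Hm0. lia.
Qed.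

Lemma gen_cond c {I : countType} (L : I -> lang) G :
  0 < c < 1 -> element_based_generator G -> generates_in_limit_noisy_omissions c I L G ->
  noisy_condition c I L.
Proof.
  intros Hc HG Hgen l _ x Hx.
  apply NNPP. intros Hn. apply not_or_and in Hn. destruct Hn as [Ha Hb].
  assert (Hgood : forall i, In i l -> exists m, forall n, (m < n)%nat -> noise_rate (L i) x n <= c).
  { intros i Hi. apply NNPP. intros Hn. apply Ha. exists i. split; auto.
    intros m. apply NNPP. intros Hn2. apply Hn. exists m. intros n Hmn.
    apply Rnot_lt_le. intros Hlt. apply Hn2. exists n. split; auto. }
  destruct (combine_N (fun i n => L i (gen_output G x n) = true) l) as [N HN].
  { intros i Hi. apply Hgen. apply noisy_to_omissions; auto. }
  assert (Hfin : exists m, forall y, (m <= y)%nat -> forallb (fun i => L i y) l <> true).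
  { apply NNPP. intros Hn. apply Hb. intros m. apply NNPP. intros Hn2. apply Hn.
    exists m. intros y Hy Hf. apply Hn2. exists y. split; auto. }
  destruct Hfin as [m Hm].
  apply (pigeon (gen_output G x) (Nat.max N 1) m).
  - intros a b Ha1 Hb1 Heq. destruct (Nat.lt_total a b) as [H|[H|H]]; auto.
    + exfalso. destruct (HG x Hx b ltac:(lia)) as [_ Hd]. apply (Hd a); auto; lia.
    + exfalso. destruct (HG x Hx a ltac:(lia)) as [_ Hd]. apply (Hd b); auto; lia.
  - intros a Ha1. destruct (Nat.lt_ge_cases (gen_output G x a) m) as [H|H]; auto.
    exfalso. apply (Hm _ H). apply forallb_forall. intros i Hi. apply HN; auto; lia.
Qed.

Theorem theorem5p4 (c : R) (I : countType) (L : I -> lang) :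
  0 < c < 1 ->
  (forall i : I, is_language (L i)) ->
  (exists G : list nat -> nat,
      element_based_generator G /\ generates_in_limit_noisy_omissions c I L G)
  <-> noisy_condition c I L.
Proof.
  intros Hc _. split.
  - intros [G [HG Hgen]]. eapply gen_cond; eauto.
  - intros Hcond. exists (Gen c L). split; [apply Gen_valid|]. apply cond_gen; auto.
Qed.
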